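(* Let $D=\mathrm{diag}(1,-1,1,-1,\ldots)=(1,-x)$, let $P=\bigl[\binom{i}{j}\bigr]_{i,j\ge 0}=\bigl(\tfrac{1}{1-x},\tfrac{x}{1-x}\bigr)$ be the Pascal matrix, and let $\mathbb{F}^{\rm S}=(1,x(1+x))$ and $\mathbb{L}^{\rm S}=(1+2x,x(1+x))$. Let $C(x)=\frac{1-\sqrt{1-4x}}{2x}$, $M(x)=\frac{1-x-\sqrt{(1-x)^2-4x^2}}{2x^2}$ and $W(x)=\sum_{n\ge0}\binom{2n}{n}x^n$. Then: (a) $D(\mathbb{F}^{\rm S})^{-1}D=(1,xC(x))=P\left(\frac{M(x)-xM(x)-x^2M(x)^2}{1+x},\frac{x+x^2M(x)}{1+x}\right)$; (b) $D(\mathbb{L}^{\rm S})^{-1}D=\left(\frac{1}{1-2xC(x)},xC(x)\right)=(W(x),x)\,P\left(\frac{M(x)-xM(x)-x^2M(x)^2}{1+x},\frac{x+x^2M(x)}{1+x}\right)$; (c) $D(\mathbb{L}^{\rm S})^{-1}D=\left(\frac{1}{1-2xC(x)},x\right)D(\mathbb{F}^{\rm S})^{-1}D=(W(x),x)\,D(\mathbb{F}^{\rm S})^{-1}D=D(\mathbb{F}^{\rm S})^{-1}D\left(\frac{1}{1-2x},x\right)$.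
   Context: All matrices are infinite with rows and columns indexed by $0,1,2,\ldots$. For formal power series $g(x)=g_0+g_1x+\cdots$ and $f(x)=f_1x+f_2x^2+\cdots$, $(g(x),f(x))$ denotes the infinite lower triangular matrix whose $j$-th column ($j=0,1,\ldots$) has generating function $g(x)f(x)^j$; it is a Riordan matrix when $g_0\neq0$ and $f_1\neq0$. Riordan matrices form a group under matrix multiplication, with $(g(x),f(x))(h(x),l(x))=(g(x)h(f(x)),l(f(x)))$ and $(g(x),f(x))^{-1}=(1/g(\bar f(x)),\bar f(x))$, where $\bar f$ is the compositional inverse of $f$. *)

(* Defs.v *)
From mathcomp Require Import all_boot all_order all_algebra.
Set Implicit Arguments. Unset Strict Implicit. Unset Printing Implicit Defensive.
Import Order.TTheory GRing.Theory Num.Theory.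
Local Open Scope ring_scope.

Definition series (R : Type) := nat -> R.
Definition mat (R : Type) := nat -> nat -> R.

Section PowerSeries.
Variable R : numFieldType.

Definition ps_const (c : R) : series R := fun n => if n is 0%N then c else 0.
Definition ps_X : series R := fun n => (n == 1%N)%:R.
Definition ps_add (f g : series R) : series R := fun n => f n + g n.
Definition ps_opp (f : series R) : series R := fun n => - f n.
Definition ps_sub (f g : series R) : series R := ps_add f (ps_opp g).
Definition ps_scale (c : R) (f : series R) : series R := fun n => c * f n.
Definition ps_mul (f g : series R) : series R :=
  fun n => \sum_(i < n.+1) f i * g (n - i)%N.
Definition ps_pow (f : series R) (k : nat) : series R :=
  iter k (ps_mul f) (ps_const 1).
(* multiplicative inverse of a series with f 0 != 0:
   1/f = f0^-1 * sum_k h^k,  h = 1 - f/f0 (h 0 = 0, so only k <= n matter) *)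
Definition ps_inv (f : series R) : series R :=
  fun n => (f 0%N)^-1 *
    \sum_(k < n.+1) ps_pow (ps_sub (ps_const 1) (ps_scale (f 0%N)^-1 f)) k n.
Definition ps_div (f g : series R) : series R := ps_mul f (ps_inv g).
(* division by x of a series with zero constant term *)
Definition ps_divX (f : series R) : series R := fun n => f n.+1.
Definition gbinom (a : R) (k : nat) : R :=
  (\prod_(i < k) (a - i%:R)) / (k`!)%:R.
(* square root of a series with constant term 1, via the binomial series
   sqrt(1 + u) = sum_k binom(1/2, k) u^k  (u 0 = 0) *)
Definition ps_sqrt (f : series R) : series R :=
  fun n => \sum_(k < n.+1)
             gbinom (1 / 2%:R) k * ps_pow (ps_sub f (ps_const 1)) k n.

Definition ps_C : series R :=
  ps_divX (ps_scale (1 / 2%:R)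
    (ps_sub (ps_const 1) (ps_sqrt (ps_sub (ps_const 1) (ps_scale 4%:R ps_X))))).
Definition ps_M : series R :=
  let one_m_x := ps_sub (ps_const 1) ps_X in
  ps_divX (ps_divX (ps_scale (1 / 2%:R)
    (ps_sub one_m_x
       (ps_sqrt (ps_sub (ps_pow one_m_x 2) (ps_scale 4%:R (ps_pow ps_X 2))))))).
Definition ps_W : series R := fun n => ('C(n.*2, n))%:R.

(* infinite matrices; all matrices below are lower triangular, for which the
   matrix product (A B)_{ij} = sum_k A_{ik} B_{kj} reduces to k <= i *)
Definition mat_mul (A B : mat R) : mat R :=
  fun i j => \sum_(k < i.+1) A i k * B k j.
Definition mat_id : mat R := fun i j => (i == j)%:R.
Definition mat_pow (A : mat R) (m : nat) : mat R := iter m (mat_mul A) mat_id.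
(* inverse of a lower triangular matrix A with nonzero diagonal:
   A = Diag (I - N), N strictly lower triangular, so
   A^-1 = (sum_m N^m) Diag^-1, and N^m i j = 0 for m > i - j *)
Definition mat_inv (A : mat R) : mat R :=
  let N := fun i j => (i == j)%:R - A i j / A i i in
  fun i j => if (i < j)%N then 0
             else (\sum_(m < i.+1) mat_pow N m i j) / A j j.

Definition riordan (g f : series R) : mat R :=
  fun n k => ps_mul g (ps_pow f k) n.

Definition D_mat : mat R := riordan (ps_const 1) (ps_opp ps_X).
Definition pascal_mat : mat R :=
  riordan (ps_inv (ps_sub (ps_const 1) ps_X))
          (ps_div ps_X (ps_sub (ps_const 1) ps_X)).
Definition FS : mat R :=
  riordan (ps_const 1) (ps_mul ps_X (ps_add (ps_const 1) ps_X)).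
Definition LS : mat R :=
  riordan (ps_add (ps_const 1) (ps_scale 2%:R ps_X))
          (ps_mul ps_X (ps_add (ps_const 1) ps_X)).

End PowerSeries.

(* Main.v *)
Require Import Defs.
From HB Require Import structures.
From mathcomp Require Import all_boot all_order all_algebra.
From mathcomp Require Import boolp.
From mathcomp Require Import ring.
Set Implicit Arguments. Unset Strict Implicit. Unset Printing Implicit Defensive.
Import GRing.Theory Num.Theory.
Local Open Scope ring_scope.

Section Fps.
Variable R : numFieldType.

Definition fps := nat -> R.
HB.instance Definition _ := Choice.copy fps (nat -> R).

Definition tr (N : nat) (a : fps) : {poly R} := \poly_(i < N) a i.
Definition eqN (N : nat) (p q : {poly R}) := forall i, (i < N)%N -> p`_i = q`_i.

Lemma coef_tr N a i : (tr N a)`_i = if (i < N)%N then a i else 0.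
Proof. by rewrite /tr coef_poly. Qed.

Lemma eqN_refl N p : eqN N p p. Proof. by []. Qed.
Lemma eqN_sym N p q : eqN N p q -> eqN N q p.
Proof. by move=> h i hi; rewrite h. Qed.
Lemma eqN_trans N p q r : eqN N p q -> eqN N q r -> eqN N p r.
Proof. by move=> h1 h2 i hi; rewrite h1 ?h2. Qed.

Lemma eqN_mul N p p' q q' : eqN N p p' -> eqN N q q' -> eqN N (p * q) (p' * q').
Proof.
move=> hp hq i hi; rewrite !coefM; apply: eq_bigr => j _.
have hj : (j < N)%N by apply: leq_ltn_trans hi; rewrite -ltnS.
have hij : (i - j < N)%N by apply: leq_ltn_trans hi; apply: leq_subr.
by rewrite hp // hq.
Qed.

Lemma mul_tr N a b i : (i < N)%N ->
  ps_mul a b i = (tr N a * tr N b)`_i.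
Proof.
move=> hi; rewrite coefM /ps_mul; apply: eq_bigr => j _.
have hj : (j < N)%N by apply: leq_ltn_trans hi; rewrite -ltnS.
have hij : (i - j < N)%N by apply: leq_ltn_trans hi; apply: leq_subr.
by rewrite !coef_tr hj hij.
Qed.

Lemma tr_mul N a b : eqN N (tr N (ps_mul a b)) (tr N a * tr N b).
Proof. by move=> i hi; rewrite coef_tr hi (mul_tr _ _ hi). Qed.

Lemma ps_mulA : associative (@ps_mul R).
Proof.
move=> a b c; apply: funext => n.
rewrite (@mul_tr n.+1 _ _ n (ltnSn n)) [RHS](@mul_tr n.+1 _ _ n (ltnSn n)).
rewrite (eqN_mul (@eqN_refl n.+1 _) (@tr_mul n.+1 _ _)) //.
rewrite (eqN_mul (@tr_mul n.+1 _ _) (@eqN_refl n.+1 _)) //.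
by rewrite mulrA.
Qed.

Lemma ps_mulC : commutative (@ps_mul R).
Proof.
move=> a b; apply: funext => n.
by rewrite (@mul_tr n.+1 _ _ n (ltnSn n)) [RHS](@mul_tr n.+1 _ _ n (ltnSn n)) mulrC.
Qed.

Lemma ps_mul1 : left_id (ps_const 1) (@ps_mul R).
Proof.
move=> a; apply: funext => n; rewrite /ps_mul big_ord_recl /= mul1r subn0.
by rewrite big1 ?addr0 // => i _; rewrite mul0r.
Qed.

Lemma ps_mulDl : left_distributive (@ps_mul R) (@ps_add R).
Proof.
move=> a b c; apply: funext => n; rewrite /ps_mul /ps_add -big_split /=.
by apply: eq_bigr => i _; rewrite mulrDl.
Qed.

Lemma ps_addA : associative (@ps_add R).
Proof. by move=> a b c; apply: funext => n; rewrite /ps_add addrA. Qed.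
Lemma ps_addC : commutative (@ps_add R).
Proof. by move=> a b; apply: funext => n; rewrite /ps_add addrC. Qed.
Lemma ps_add0 : left_id (ps_const 0) (@ps_add R).
Proof. by move=> a; apply: funext => -[|n]; rewrite /ps_add /= add0r. Qed.
Lemma ps_addN : left_inverse (ps_const 0) (@ps_opp R) (@ps_add R).
Proof. by move=> a; apply: funext => -[|n]; rewrite /ps_add /ps_opp /= addNr. Qed.

HB.instance Definition _ := GRing.isZmodule.Build fps ps_addA ps_addC ps_add0 ps_addN.

Lemma ps_one_neq0 : (ps_const 1 : fps) != 0.
Proof.
apply/eqP => h; have := congr1 (fun f : fps => f 0%N) h.
by rewrite /= => /eqP; rewrite oner_eq0.
Qed.

HB.instance Definition _ := GRing.Zmodule_isComNzRing.Build fps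
  ps_mulA ps_mulC ps_mul1 ps_mulDl ps_one_neq0.



Local Notation X := (ps_X R : fps).
Local Notation cst c := (@ps_const R c : fps).

Lemma mulE (a b : fps) : ps_mul a b = a * b. Proof. by []. Qed.
Lemma addE (a b : fps) : ps_add a b = a + b. Proof. by []. Qed.
Lemma oppE (a : fps) : ps_opp a = - a. Proof. by []. Qed.
Lemma subE (a b : fps) : ps_sub a b = a - b. Proof. by []. Qed.
Lemma oneE : cst 1 = (1 : fps). Proof. by []. Qed.
Lemma zeroE : cst 0 = (0 : fps). Proof. by []. Qed.

Lemma fcoefD (a b : fps) n : (a + b) n = a n + b n. Proof. by []. Qed.
Lemma fcoefN (a : fps) n : (- a) n = - a n. Proof. by []. Qed.
Lemma fcoefB (a b : fps) n : (a - b) n = a n - b n. Proof. by []. Qed.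
Lemma fcoef0 n : (0 : fps) n = 0. Proof. by case: n. Qed.
Lemma fcoef1 n : (1 : fps) n = (n == 0)%:R. Proof. by case: n. Qed.
Lemma fcoefMn (a : fps) k n : (a *+ k) n = a n *+ k.
Proof. by elim: k => [|k ih]; rewrite ?mulr0n ?fcoef0 // !mulrS fcoefD ih. Qed.
Lemma fcoef_sum I (r : seq I) (P : pred I) (F : I -> fps) n :
  (\sum_(i <- r | P i) F i) n = \sum_(i <- r | P i) F i n.
Proof.
elim: r => [|x r ih]; first by rewrite !big_nil fcoef0.
by rewrite !big_cons; case: (P x); rewrite ?fcoefD ih.
Qed.

Lemma fcoefM (a b : fps) n : (a * b) n = \sum_(i < n.+1) a i * b (n - i)%N.
Proof. by []. Qed.

Lemma fcoefM0 (a b : fps) : (a * b) 0%N = a 0%N * b 0%N.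
Proof. by rewrite fcoefM big_ord1. Qed.

Lemma fcoefCM c (a : fps) n : (cst c * a) n = c * a n.
Proof.
rewrite fcoefM big_ord_recl /= subn0 big1 ?addr0 // => i _.
by rewrite mul0r.
Qed.

Lemma cstD a b : cst (a + b) = cst a + cst b.
Proof. by apply: funext => -[|n]; rewrite fcoefD //= addr0. Qed.
Lemma cstN a : cst (- a) = - cst a.
Proof. by apply: funext => -[|n]; rewrite fcoefN //= oppr0. Qed.
Lemma cstB a b : cst (a - b) = cst a - cst b.
Proof. by rewrite cstD cstN. Qed.
Lemma cstM a b : cst (a * b) = cst a * cst b.
Proof. by apply: funext => n; rewrite fcoefCM; case: n => //= n; rewrite mulr0. Qed.
Lemma cstn k : cst k%:R = k%:R.
Proof.
elim: k => [|k ih]; first by rewrite zeroE.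
by rewrite -addn1 natrD cstD ih oneE natrD.
Qed.

Lemma scaleE c (a : fps) : ps_scale c a = cst c * a.
Proof. by apply: funext => n; rewrite fcoefCM. Qed.

Lemma powE (a : fps) k : ps_pow a k = a ^+ k.
Proof. by elim: k => [|k ih] //=; rewrite ih exprS. Qed.

Lemma divE (a b : fps) : ps_div a b = a * (ps_inv b : fps).
Proof. by []. Qed.

Lemma fcoefXM (g : fps) n : (X * g) n = if n is n'.+1 then g n' else 0.
Proof.
case: n => [|n]; first by rewrite fcoefM0 mul0r.
rewrite fcoefM big_ord_recl big_ord_recl /= mul0r add0r mul1r subSS subn0.
by rewrite big1 ?addr0 // => i _; rewrite /ps_X /= mul0r.
Qed.

Lemma fcoefXnM k (g : fps) n :
  (X ^+ k * g) n = if (n < k)%N then 0 else g (n - k)%N.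
Proof.
elim: k n g => [|k ih] n g; first by rewrite expr0 mul1r subn0.
rewrite exprSr -mulrA ih fcoefXM.
case: (ltnP n k) => h; first by rewrite (ltn_trans h (ltnSn k)).
rewrite ltnS leq_eqVlt; case: eqP => [->|ne] /=; first by rewrite subnn.
have hk : (k < n)%N by rewrite ltn_neqAle h andbT; apply/eqP => e; apply: ne.
rewrite ltnNge (ltnW hk) /=; case e: (n - k)%N => [|m]; [by move: hk; rewrite -subn_gt0 e | by rewrite subnS e].
Qed.

Lemma fcoefXn k n : ((X : fps) ^+ k) n = (n == k)%:R.
Proof.
rewrite -[X ^+ k]mulr1 fcoefXnM fcoef1.
case: ltngtP => h //; first by rewrite subn_eq0 leqNgt h.
by rewrite h subnn.
Qed.

Lemma divXK (f : fps) : f 0%N = 0 -> (X : fps) * (ps_divX f : fps) = f.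
Proof. by move=> h; apply: funext => -[|n]; rewrite fcoefXM. Qed.

Lemma X_inj (f g : fps) : X * f = X * g -> f = g.
Proof.
move=> h; apply: funext => n; have := congr1 (fun u : fps => u n.+1) h.
by rewrite /= !fcoefXM.
Qed.


Lemma mul_tr' N (a b : fps) i : (i < N)%N -> (a * b) i = (tr N a * tr N b)`_i.
Proof. exact: mul_tr. Qed.

Lemma tr_pow N (f : fps) k : eqN N (tr N (f ^+ k)) (tr N f ^+ k).
Proof.
elim: k => [|k ih].
  by move=> i hi; rewrite coef_tr hi !expr0 fcoef1 coef1.
move=> i hi; rewrite !exprS coef_tr hi (mul_tr' _ _ hi).
by apply: eqN_mul ih i hi.
Qed.

Lemma poly_val (q p : {poly R}) i n : q`_0 = 0 -> (n < i)%N -> (p * q ^+ i)`_n = 0.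
Proof.
move=> q0 hn.
have hq : q = drop_poly 1 q * 'X.
  apply/polyP => j; rewrite coefMX coef_drop_poly.
  by case: j => [|j] //=; rewrite addn1.
by rewrite hq exprMn mulrA coefMXn hn.
Qed.

Lemma fval (g f : fps) k n : f 0%N = 0 -> (n < k)%N -> (g * f ^+ k) n = 0.
Proof.
move=> f0 hn; rewrite (@mul_tr' n.+1) // (eqN_mul (@eqN_refl n.+1 _) (tr_pow _ _)) //.
by apply: poly_val hn; rewrite coef_tr.
Qed.

Lemma fval1 (f : fps) k n : f 0%N = 0 -> (n < k)%N -> (f ^+ k) n = 0.
Proof. by move=> f0 hn; rewrite -[f ^+ k]mul1r fval. Qed.

Lemma sum_trunc (F : nat -> R) m n : (m <= n)%N ->
  (forall k, (m <= k)%N -> (k < n)%N -> F k = 0) ->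
  \sum_(k < n) F k = \sum_(k < m) F k.
Proof.
move=> hmn h; rewrite -!(big_mkord xpredT) (big_cat_nat (leq0n m) hmn) /=.
rewrite [X in _ + X]big1_seq ?addr0 // => k /andP[_]; rewrite mem_index_iota.
by case/andP=> h1 h2; apply: h.
Qed.

Definition comp (a f : fps) : fps := fun n => \sum_(k < n.+1) a k * (f ^+ k) n.

Lemma compE_N (a f : fps) n N : f 0%N = 0 -> (n < N)%N ->
  comp a f n = \sum_(k < N) a k * (f ^+ k) n.
Proof.
move=> f0 hn; rewrite /comp; symmetry.
apply: (@sum_trunc (fun k => a k * (f ^+ k) n)) => // k hk _.
by rewrite fval1 ?mulr0.
Qed.

Lemma compP (a f : fps) N n : f 0%N = 0 -> (n < N)%N ->
  comp a f n = (tr N a \Po tr N f)`_n.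
Proof.
move=> f0 hn; rewrite coef_comp_poly.
have -> : \sum_(i < size (tr N a)) (tr N a)`_i * (tr N f ^+ i)`_n =
          \sum_(i < N) (tr N a)`_i * (tr N f ^+ i)`_n.
  symmetry; apply: (@sum_trunc (fun i => (tr N a)`_i * (tr N f ^+ i)`_n)).
  - exact: size_poly.
  - by move=> k hk _; rewrite nth_default ?mul0r.
rewrite (compE_N _ f0 hn); apply: eq_bigr => k _.
by rewrite coef_tr (ltn_ord k) -(tr_pow _ _ hn) coef_tr hn.
Qed.

Lemma pcompN N (p p' q : {poly R}) : q`_0 = 0 -> eqN N p p' ->
  eqN N (p \Po q) (p' \Po q).
Proof.
move=> q0 h i hi; apply/eqP; rewrite -subr_eq0 -coefB -comp_polyB coef_comp_poly.
apply/eqP; apply: big1 => j _.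
case: (ltnP j N) => hj; first by rewrite coefB h // subrr mul0r.
by rewrite -[_ ^+ j]mul1r poly_val ?mulr0 // (leq_trans hi hj).
Qed.

Lemma compM (a b f : fps) : f 0%N = 0 -> comp (a * b) f = comp a f * comp b f.
Proof.
move=> f0; apply: funext => n.
have hn := ltnSn n.
have F0 : (tr n.+1 f)`_0 = 0 by rewrite coef_tr.
rewrite (compP _ f0 hn) (pcompN F0 (@tr_mul n.+1 a b) hn) comp_polyM.
rewrite (@mul_tr' n.+1 _ _ n hn); apply: (@eqN_mul n.+1) => // i hi;
  by rewrite coef_tr hi (compP _ f0 hi).
Qed.

Lemma compD (a b f : fps) : comp (a + b) f = comp a f + comp b f.
Proof.
apply: funext => n; rewrite fcoefD /comp -big_split /=.
by apply: eq_bigr => k _; rewrite fcoefD mulrDl.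
Qed.

Lemma compN (a f : fps) : comp (- a) f = - comp a f.
Proof.
apply: funext => n; rewrite fcoefN /comp -sumrN.
by apply: eq_bigr => k _; rewrite fcoefN mulNr.
Qed.

Lemma compB (a b f : fps) : comp (a - b) f = comp a f - comp b f.
Proof. by rewrite compD compN. Qed.

Lemma compC c (f : fps) : comp (cst c) f = cst c.
Proof.
apply: funext => n; rewrite /comp big_ord_recl /= expr0 fcoef1.
rewrite big1 ?addr0; last by move=> i _; rewrite mul0r.
by case: n => [|n] /=; rewrite ?mulr1 ?mulr0.
Qed.

Lemma comp1 (f : fps) : comp 1 f = 1.
Proof. exact: (compC 1 f). Qed.

Lemma comp_at0 (a f : fps) : comp a f 0%N = a 0%N.
Proof. by rewrite /comp big_ord1 expr0 fcoef1 mulr1. Qed.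

Lemma compX (f : fps) : f 0%N = 0 -> comp X f = f.
Proof.
move=> f0; apply: funext => -[|n]; first by rewrite comp_at0.
rewrite /comp big_ord_recl big_ord_recl /= mul0r add0r mul1r expr1.
by rewrite big1 ?addr0 // => i _; rewrite mul0r.
Qed.

Lemma compXn (a f : fps) k : f 0%N = 0 -> comp (a ^+ k) f = comp a f ^+ k.
Proof.
move=> f0; elim: k => [|k ih]; first by rewrite !expr0 comp1.
by rewrite !exprS compM // ih.
Qed.

Lemma comp_rX (a : fps) : comp a X = a.
Proof.
apply: funext => n; rewrite /comp (bigD1 (Ordinal (ltnSn n))) //= fcoefXn eqxx mulr1.
by rewrite big1 ?addr0 // => i /eqP hi; rewrite fcoefXn;
  case: eqP => // e; [exfalso; apply: hi; apply: val_inj|rewrite mulr0].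
Qed.

Lemma cstX c k : cst (c ^+ k) = cst c ^+ k.
Proof. by elim: k => [|k ih]; rewrite ?expr0 ?oneE // !exprS cstM ih. Qed.

Lemma comp_negX (a : fps) n : comp a (- X) n = (-1) ^+ n * a n.
Proof.
rewrite /comp (bigD1 (Ordinal (ltnSn n))) //=.
have E k m : ((- X) ^+ k) m = (-1) ^+ k * (m == k)%:R.
  rewrite (exprNn X k).
  have -> : (-1 : fps) ^+ k = cst ((-1) ^+ k) by rewrite cstX cstN oneE.
  by rewrite fcoefCM fcoefXn.
rewrite E eqxx mulr1 mulrC big1 ?addr0 // => i /eqP hi; rewrite E.
by case: eqP => // e; [exfalso; apply: hi; apply: val_inj|rewrite !mulr0].
Qed.

Definition gs : fps := fun _ => 1.

Lemma gs_geo : gs * (1 - X) = 1.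
Proof.
apply: funext => n; rewrite mulrBr mulr1 fcoefB mulrC fcoefXM fcoef1.
by case: n => [|n] /=; rewrite ?subr0 ?subrr.
Qed.

Lemma invE (f : fps) :
  ps_inv f = cst (f 0%N)^-1 * comp gs (1 - cst (f 0%N)^-1 * f).
Proof.
apply: funext => n; rewrite fcoefCM /ps_inv /comp; congr (_ * _).
by apply: eq_bigr => k _; rewrite mul1r powE subE scaleE.
Qed.

Lemma invK (f : fps) : f 0%N != 0 -> f * ps_inv f = 1.
Proof.
move=> nz; set h := 1 - cst (f 0%N)^-1 * f.
have h0 : h 0%N = 0 by rewrite /h fcoefB fcoefCM mulVf // fcoef1 subrr.
have e : comp gs h * (1 - h) = 1.
  have -> : 1 - h = comp (1 - X) h by rewrite compB comp1 compX.
  by rewrite -compM // gs_geo comp1.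
rewrite invE -[RHS]e /h; ring.
Qed.

Lemma unit_cancel (a b : fps) : b 0%N != 0 -> a * b = 0 -> a = 0.
Proof. by move=> nz h; rewrite -[a]mulr1 -(invK nz) mulrA h mul0r. Qed.


Lemma natr_neq0 n : (n.+1)%:R != 0 :> R.
Proof. by rewrite pnatr_eq0. Qed.
Lemma fact_neq0 n : (n`!)%:R != 0 :> R.
Proof. by rewrite pnatr_eq0 -lt0n fact_gt0. Qed.

Lemma natr1_neq0 n : 1 + n%:R != 0 :> R.
Proof. by rewrite -mulrS natr_neq0. Qed.

Lemma gbinom0 (a : R) : gbinom a 0 = 1.
Proof. by rewrite /gbinom big_ord0 divr1. Qed.

Lemma gbinomS (a : R) k : gbinom a k.+1 * k.+1%:R = gbinom a k * (a - k%:R).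
Proof.
rewrite /gbinom big_ord_recr /= factS natrM.
have h1 := natr1_neq0 k; have h2 := fact_neq0 k.
field; by rewrite h1 h2.
Qed.

Lemma gbinom_abs (a : R) k : gbinom a k.+1 * k.+1%:R = a * gbinom (a - 1) k.
Proof.
rewrite /gbinom big_ord_recl /= factS natrM subr0.
have -> : \prod_(i < k) (a - (bump 0 i)%:R) = \prod_(i < k) (a - 1 - i%:R).
  by apply: eq_bigr => i _; rewrite /bump /= add1n -addn1 natrD opprD addrA addrAC.
have h1 := natr1_neq0 k; have h2 := fact_neq0 k.
field; by rewrite h1 h2.
Qed.

Lemma vandermonde k : forall a b : R,
  \sum_(i < k.+1) gbinom a i * gbinom b (k - i) = gbinom (a + b) k.
Proof.
elim: k => [|k ih] a b; first by rewrite big_ord1 !gbinom0 mulr1.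
apply: (mulIf (natr_neq0 k)); rewrite gbinom_abs big_distrl /=.
have -> : \sum_(i < k.+2) gbinom a i * gbinom b (k.+1 - i) * k.+1%:R =
   \sum_(i < k.+2) gbinom a i * gbinom b (k.+1 - i) * i%:R +
   \sum_(i < k.+2) gbinom a i * gbinom b (k.+1 - i) * (k.+1 - i)%:R.
  rewrite -big_split /=; apply: eq_bigr => i _.
  by rewrite -mulrDr -natrD subnKC // -ltnS.
rewrite big_ord_recl /= mulr0 add0r.
have -> : \sum_(i < k.+1) gbinom a (bump 0 i) * gbinom b (k.+1 - bump 0 i) *
     (bump 0 i)%:R = a * \sum_(i < k.+1) gbinom (a - 1) i * gbinom b (k - i).
  rewrite big_distrr; apply: eq_bigr => i _.
  by rewrite /bump /= add1n subSS mulrAC gbinom_abs mulrA.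
rewrite ih big_ord_recr /= subnn mulr0 addr0.
have -> : \sum_(i < k.+1) gbinom a (widen_ord (leqnSn k.+1) i) *
     gbinom b (k.+1 - widen_ord (leqnSn k.+1) i) * (k.+1 - widen_ord (leqnSn k.+1) i)%:R
   = b * \sum_(i < k.+1) gbinom a i * gbinom (b - 1) (k - i).
  rewrite big_distrr; apply: eq_bigr => i _ /=.
  rewrite subSn; last by rewrite -ltnS.
  rewrite -mulrA gbinom_abs; ring.
rewrite ih.
have -> : a + (b - 1) = a - 1 + b by ring.
have -> : a + b - 1 = a - 1 + b by ring.
by rewrite mulrDl.
Qed.

Definition gb (a : R) : fps := fun k => gbinom a k.

Lemma gb_mul (a b : R) : gb a * gb b = gb (a + b).
Proof. by apply: funext => k; rewrite fcoefM vandermonde. Qed.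

Lemma gb0 : gb 0 = 1.
Proof.
apply: funext => -[|k]; first by rewrite /gb gbinom0.
by rewrite /gb /gbinom big_ord_recl /= subrr mul0r mul0r.
Qed.

Lemma gb1 : gb 1 = 1 + X.
Proof.
apply: funext => -[|[|k]]; rewrite fcoefD.
- by rewrite /gb gbinom0 addr0.
- by rewrite /gb /gbinom big_ord1 /= subr0 divr1 add0r.
- rewrite /gb /gbinom big_ord_recl big_ord_recl /=.
  by rewrite /bump /= add1n subrr !mul0r mulr0 mul0r addr0.
Qed.

Lemma sqrtE (f : fps) : ps_sqrt f = comp (gb (1 / 2%:R)) (f - 1).
Proof.
by apply: funext => n; rewrite /ps_sqrt /comp; apply: eq_bigr => k _; rewrite powE.
Qed.

Lemma sqrt_sq (f : fps) : f 0%N = 1 -> (ps_sqrt f : fps) * ps_sqrt f = f.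
Proof.
move=> f0; have u0 : (f - 1) 0%N = 0 by rewrite fcoefB f0 fcoef1 subrr.
rewrite sqrtE -compM // gb_mul.
have -> : 1 / 2%:R + 1 / 2%:R = 1 :> R.
  by field.
by rewrite gb1 compD comp1 compX // addrC subrK.
Qed.

Lemma sqrt_at0 (f : fps) : ps_sqrt f 0%N = 1.
Proof. by rewrite sqrtE comp_at0 /gb gbinom0. Qed.

Lemma comp_cX (a : fps) c n : comp a (cst c * X) n = c ^+ n * a n.
Proof.
rewrite /comp (bigD1 (Ordinal (ltnSn n))) //=.
have E k m : ((cst c * X) ^+ k) m = c ^+ k * (m == k)%:R.
  by rewrite exprMn -cstX fcoefCM fcoefXn.
rewrite E eqxx mulr1 mulrC big1 ?addr0 // => i /eqP hi; rewrite E.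
by case: eqP => // e; [exfalso; apply: hi; apply: val_inj|rewrite !mulr0].
Qed.

Lemma central_binom n :
  ('C(n.*2, n))%:R = gbinom (- (1 / 2%:R)) n * (- 4%:R) ^+ n :> R.
Proof.
pose T := fun n : nat => (gbinom (- (1 / 2%:R)) n * (- 4%:R) ^+ n : R).
suff H : forall n, T n * (n`!)%:R * (n`!)%:R = (n.*2)`!%:R.
  have := bin_fact (leq_addl n n); rewrite -addnn addnK addnn => hb.
  apply: (mulIf (fact_neq0 n)); apply: (mulIf (fact_neq0 n)).
  by rewrite -/(T n) H -hb !natrM mulrA.
elim=> [|k ih]; first by rewrite /T gbinom0 expr0 !mulr1 fact0.
have hT : T k.+1 * k.+1%:R = T k * (2%:R * (k.*2).+1%:R).
  rewrite /T exprS mulrAC gbinomS [(k.*2).+1%:R]mulrS -muln2 natrM.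
  by field.
rewrite doubleS !factS !natrM mulrA.
have -> : T k.+1 * (k.+1%:R * k`!%:R) * k.+1%:R * k`!%:R =
          (T k.+1 * k.+1%:R) * k.+1%:R * (k`!%:R * k`!%:R) by ring.
rewrite hT.
have -> : T k * (2 * (k.*2).+1%:R) * k.+1%:R * (k`!%:R * k`!%:R) =
   (T k * k`!%:R * k`!%:R) * (2 * (k.*2).+1%:R * k.+1%:R) by ring.
rewrite ih -!muln2; ring.
Qed.

Lemma W_comp : (ps_W R : fps) = comp (gb (- (1 / 2%:R))) (cst (- 4%:R) * X).
Proof. by apply: funext => n; rewrite comp_cX /ps_W central_binom mulrC. Qed.


Lemma riordanE (g f : fps) n k : riordan g f n k = (g * f ^+ k) n.
Proof. by rewrite /riordan powE. Qed.

Lemma mul_low (a b b' : fps) n : (forall i, (i <= n)%N -> b i = b' i) ->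
  (a * b) n = (a * b') n.
Proof. by move=> h; rewrite !fcoefM; apply: eq_bigr => i _; rewrite h ?leq_subr. Qed.

Lemma mat_mul_riordan (g f : fps) (B : mat R) n j : f 0%N = 0 ->
  mat_mul (riordan g f) B n j = (g * comp (fun k => B k j) f) n.
Proof.
move=> f0.
pose S := \sum_(k < n.+1) cst (B k j) * f ^+ k.
rewrite (@mul_low _ _ S); last first.
  move=> i hi; rewrite (compE_N _ f0 (hi : (i < n.+1)%N)) /S fcoef_sum.
  by apply: eq_bigr => k _; rewrite fcoefCM.
rewrite /S mulr_sumr fcoef_sum /mat_mul; apply: eq_bigr => k _.
by rewrite mulrCA fcoefCM riordanE mulrC.
Qed.

Lemma riordan_mul (g f h l : fps) : f 0%N = 0 ->
  mat_mul (riordan g f) (riordan h l) = riordan (g * comp h f) (comp l f).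
Proof.
move=> f0; apply: funext => n; apply: funext => k.
rewrite mat_mul_riordan // riordanE.
have -> : (fun m => riordan h l m k) = h * l ^+ k.
  by apply: funext => m; rewrite riordanE.
by rewrite compM // compXn // mulrA.
Qed.

Lemma riordan_id : riordan (1 : fps) X = mat_id R.
Proof.
by apply: funext => n; apply: funext => k; rewrite riordanE mul1r fcoefXn.
Qed.

Lemma riordan_lower (g f : fps) n k : f 0%N = 0 -> (n < k)%N -> riordan g f n k = 0.
Proof. by move=> f0 h; rewrite riordanE fval. Qed.

Lemma fcoefX0 (a : fps) k : (a ^+ k) 0%N = a 0%N ^+ k.
Proof. by elim: k => [|k ih]; rewrite ?expr0 ?fcoef1 // !exprS fcoefM0 ih. Qed.

Lemma riordan_diag (g f : fps) n : f 0%N = 0 ->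
  riordan g f n n = g 0%N * f 1%N ^+ n.
Proof.
move=> f0; rewrite riordanE.
have -> : f ^+ n = X ^+ n * (ps_divX f : fps) ^+ n by rewrite -exprMn divXK.
by rewrite mulrCA fcoefXnM ltnn subnn fcoefM0 fcoefX0.
Qed.

Definition lower (A : mat R) := forall i j, (i < j)%N -> A i j = 0.

Definition blk n (A : mat R) : 'M[R]_n := \matrix_(i, j) A i j.

Lemma blk_mul n A B : lower A -> blk n (mat_mul A B) = blk n A *m blk n B.
Proof.
move=> hA; apply/matrixP => i j; rewrite !mxE /mat_mul.
have -> : \sum_(k < n) blk n A i k * blk n B k j = \sum_(k < n) A i k * B k j.
  by apply: eq_bigr => k _; rewrite !mxE.
symmetry; apply: (@sum_trunc (fun k => A i k * B k j)) => // k hk _.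
by rewrite hA ?mul0r.
Qed.

Lemma blk_id n : blk n (mat_id R) = 1%:M.
Proof. by apply/matrixP => i j; rewrite !mxE. Qed.

Lemma mat_ext (A B : mat R) : (forall n, blk n A = blk n B) -> A = B.
Proof.
move=> h; apply: funext => i; apply: funext => j.
have hi : (i < (i + j).+1)%N by rewrite ltnS leq_addr.
have hj : (j < (i + j).+1)%N by rewrite ltnS leq_addl.
have := congr1 (fun M : 'M[R]_((i + j).+1) => M (Ordinal hi) (Ordinal hj)) (h (i + j).+1).
by rewrite /= !mxE.
Qed.

Lemma pow_strict (N : mat R) : (forall i j, (i < j.+1)%N -> N i j = 0) ->
  forall m i j, (i < j + m)%N -> mat_pow N m i j = 0.
Proof.
move=> hN; elim=> [|m ih] i j hij.
  by rewrite /mat_pow /= /mat_id; move: hij; rewrite addn0 => /ltn_eqF ->.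
rewrite /mat_pow /= -/(mat_pow N m) /mat_mul big1 // => k _.
have := ltn_ord k; rewrite ltnS leq_eqVlt => /orP[/eqP ->|hk].
  by rewrite hN ?mul0r.
by rewrite ih ?mulr0 //; apply: leq_trans hk _; rewrite -ltnS -addnS.
Qed.

Lemma mat_inv_unique (A B : mat R) : lower A -> (forall i, A i i != 0) ->
  mat_mul A B = mat_id R -> mat_inv A = B.
Proof.
move=> hA hd hAB.
pose N : mat R := fun i j => (i == j)%:R - A i j / A i i.
have hN : forall i j, (i < j.+1)%N -> N i j = 0.
  move=> i j; rewrite ltnS leq_eqVlt => /orP[/eqP ->|hij].
    by rewrite /N eqxx divff // subrr.
  by rewrite /N (ltn_eqF hij) hA // mul0r subrr.
have hNl : lower N by move=> i j hij; apply: hN; apply: ltnW.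
have hP := pow_strict hN.
apply: mat_ext => n.
pose pw k := blk n (mat_pow N k).
have pwS k : pw k.+1 = blk n N *m pw k.
  by rewrite /pw -blk_mul.
have tele k : (1%:M - blk n N) *m (\sum_(m < k) pw m) = 1%:M - pw k.
  elim: k => [|k ih].
    by rewrite big_ord0 mulmx0 /pw /mat_pow /= blk_id subrr.
  rewrite big_ord_recr /= mulmxDr ih mulmxBl mul1mx -pwS.
  by rewrite /pw /mat_pow /= addrA subrK.
have pwn : pw n = 0.
  by apply/matrixP => i j; rewrite !mxE hP // ltn_addl.
pose Dg : 'M[R]_n := diag_mx (\row_j A j j).
pose Di : 'M[R]_n := diag_mx (\row_j (A j j)^-1).
have hAblk : blk n A = Dg *m (1%:M - blk n N).
  apply/matrixP => i j; rewrite mul_diag_mx !mxE /N.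
  by rewrite opprB addrCA subrr addr0 mulrC divfK.
have hinv : blk n (mat_inv A) = (\sum_(m < n) pw m) *m Di.
  apply/matrixP => i j; rewrite mul_mx_diag !mxE summxE /mat_inv -/N.
  case: ltnP => hij.
    rewrite big1 ?mul0r // => m _; rewrite /pw mxE hP //.
    by apply: leq_trans hij _; rewrite leq_addr.
  congr (_ * _).
  have -> : \sum_(m < n) pw m i j = \sum_(m < n) mat_pow N m i j.
    by apply: eq_bigr => m _; rewrite /pw mxE.
  symmetry; apply: (@sum_trunc (fun m => mat_pow N m i j)); first exact: ltn_ord.
  by move=> k hk _; rewrite hP // (leq_trans hk) // leq_addl.
have h1 : blk n A *m blk n (mat_inv A) = 1%:M.
  rewrite hAblk hinv mulmxA -(mulmxA Dg) tele pwn subr0 mulmx1.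
  apply/matrixP => i j; rewrite mul_diag_mx !mxE.
  by case: eqP => [->|_]; rewrite ?mulr0 ?mulr1n ?divff.
have h2 : blk n A *m blk n B = 1%:M by rewrite -blk_mul // hAB blk_id.
have h3 := mulmx1C h1.
by rewrite -[blk n B]mul1mx -h3 -mulmxA h2 mulmx1.
Qed.


Lemma cst_unit (E : fps) c : c != 0 -> E * cst c = 0 -> E = 0.
Proof. by move=> hc h; apply: (unit_cancel (b := cst c)). Qed.

Lemma nat_unit (E : fps) k : E * (k.+1)%:R = 0 -> E = 0.
Proof. by rewrite -cstn => h; apply: (cst_unit (natr_neq0 k) h). Qed.

Lemma half2 : (2%:R : fps) * cst (1 / 2%:R) = 1.
Proof. by rewrite -cstn -cstM -oneE; congr ps_const; field. Qed.

Definition ss : fps := ps_sqrt (ps_sub (ps_const 1) (ps_scale 4%:R (ps_X R))).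
Definition aa : fps := X * (ps_C R : fps).

Lemma ss0 : ss 0%N = 1.
Proof. exact: sqrt_at0. Qed.

Lemma ss_sq : ss * ss = 1 - 4%:R * X.
Proof.
rewrite /ss sqrt_sq; first by rewrite subE scaleE cstn.
by rewrite subE scaleE fcoefB fcoefCM /= mulr0 subr0.
Qed.

Lemma aa_ss : ss = 1 - 2%:R * aa.
Proof.
have b0 : (cst (1 / 2%:R) * (1 - ss)) 0%N = 0.
  by rewrite fcoefCM fcoefB ss0 fcoef1 subrr mulr0.
have e : aa = cst (1 / 2%:R) * (1 - ss).
  rewrite /aa /ps_C -(divXK b0); congr (_ * _).
  by congr ps_divX; rewrite scaleE subE.
rewrite e mulrA half2; ring.
Qed.

Lemma aa0 : aa 0%N = 0.
Proof. by rewrite /aa fcoefXM. Qed.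

Lemma aa_eq : aa * aa - aa + X = 0.
Proof.
apply: (@nat_unit _ 3).
have := ss_sq; rewrite aa_ss => h.
have -> : (aa * aa - aa + X) * 4%:R =
   ((1 - 2%:R * aa) * (1 - 2%:R * aa)) - (1 - 4%:R * X) by ring.
by rewrite h subrr.
Qed.

Lemma W_ss : (ps_W R : fps) * ss = 1.
Proof.
rewrite W_comp /ss sqrtE subE scaleE cstn.
have -> : 1 - 4%:R * X - 1 = cst (- 4%:R) * X by rewrite cstN cstn; ring.
rewrite -compM; last by rewrite fcoefCM /= mulr0.
by rewrite gb_mul addNr gb0 comp1.
Qed.

Definition tt : fps := ps_sqrt (ps_sub (ps_pow (ps_sub (ps_const 1) (ps_X R)) 2)
                                      (ps_scale 4%:R (ps_pow (ps_X R) 2))).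

Lemma tt_sq : tt * tt = (1 - X) ^+ 2 - 4%:R * X ^+ 2.
Proof.
rewrite /tt sqrt_sq; first by rewrite !subE !powE scaleE cstn.
rewrite !subE !powE scaleE fcoefB fcoefX0 fcoefB fcoefCM fcoefX0 /=.
by rewrite subr0 expr1n expr2 mul0r mulr0 subr0.
Qed.

Lemma M_eq : X ^+ 2 * (ps_M R : fps) ^+ 2 - (1 - X) * ps_M R + 1 = 0.
Proof.
pose b : fps := cst (1 / 2%:R) * ((1 - X) - tt).
have b0 : b 0%N = 0.
  rewrite /b fcoefCM fcoefB fcoefB fcoef1 /tt sqrt_at0 /=.
  by rewrite subr0 subrr mulr0.
have E1 : b * b - (1 - X) * b + X ^+ 2 = 0.
  apply: (@nat_unit _ 3).
  have ht : tt = 1 - X - 2%:R * b by rewrite /b mulrA half2; ring.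
  have := tt_sq; rewrite ht => h.
  have -> : (b * b - (1 - X) * b + X ^+ 2) * 4%:R =
     ((1 - X - 2%:R * b) * (1 - X - 2%:R * b)) - ((1 - X) ^+ 2 - 4%:R * X ^+ 2)
     by ring.
  by rewrite h subrr.
pose b' : fps := ps_divX b.
have hb : b = X * b' by rewrite divXK.
have E2 : X * b' * b' - (1 - X) * b' + X = 0.
  apply: X_inj; rewrite mulr0 -E1 hb; ring.
have b'0 : b' 0%N = 0.
  have := congr1 (fun u : fps => u 0%N) E2.
  rewrite /= fcoefD fcoefB -mulrA fcoefXM fcoefM0 fcoefB fcoef1 /= sub0r.
  by rewrite subr0 mul1r addr0 => /eqP; rewrite oppr_eq0 => /eqP.
have hM : b' = X * (ps_M R : fps).
  have eb : ps_scale (1 / 2%:R) (ps_sub (ps_sub (ps_const 1) (ps_X R)) tt) = b.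
    by rewrite scaleE !subE.
  have -> : ps_M R = ps_divX b'.
    by rewrite /ps_M /= -/tt eb.
  by rewrite divXK.
apply: (@X_inj _ 0); rewrite mulr0 -E2 hM; ring.
Qed.


Lemma compn k (f : fps) : comp (k%:R) f = k%:R.
Proof. by rewrite -cstn compC. Qed.
Lemma comp0 (f : fps) : comp 0 f = 0.
Proof. exact: (compC 0 f). Qed.
Lemma compM' (f : fps) : f 0%N = 0 -> forall a b, comp (a * b) f = comp a f * comp b f.
Proof. by move=> f0 a b; apply: compM. Qed.
Lemma compXn' (f : fps) : f 0%N = 0 -> forall a k, comp (a ^+ k) f = comp a f ^+ k.
Proof. by move=> f0 a k; apply: compXn. Qed.

Lemma negX0 : (- X) 0%N = 0.
Proof. by rewrite fcoefN /= oppr0. Qed.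

Lemma comp_negX_f (f : fps) : f 0%N = 0 -> comp (- X) f = - f.
Proof. by move=> f0; rewrite compN compX. Qed.

Lemma negneg (a : fps) : comp (comp a (- X)) (- X) = a.
Proof.
apply: funext => n; rewrite !comp_negX mulrA -exprMn.
by rewrite mulrNN mulr1 expr1n mul1r.
Qed.

Lemma inv_unique (u w s : fps) : u * s = 1 -> w * s = 1 -> u = w.
Proof.
move=> h1 h2; rewrite -[u]mulr1 -h2 mulrCA h1 mulr1 //.
Qed.

Lemma quad_unique (q : fps) : q 0%N = 0 -> q * q - q + X = 0 -> q = aa.
Proof.
move=> q0 hq; apply/eqP; rewrite -subr_eq0; apply/eqP.
apply: (@unit_cancel _ (q + aa - 1)).
  by rewrite fcoefB fcoefD q0 aa0 fcoef1 /= add0r sub0r oppr_eq0 oner_eq0.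
have -> : (q - aa) * (q + aa - 1) = (q * q - q + X) - (aa * aa - aa + X) by ring.
by rewrite hq aa_eq subrr.
Qed.

Lemma inv_at0 (f : fps) : f 0%N != 0 -> (ps_inv f : fps) 0%N = (f 0%N)^-1.
Proof.
move=> nz; have := congr1 (fun u : fps => u 0%N) (invK nz).
rewrite /= fcoefM0 fcoef1 /= => h.
by rewrite -[LHS]mul1r -(mulVf nz) -mulrA h mulr1.
Qed.


Lemma main_thm :
  let x := ps_X R in
  let one := ps_const (1 : R) in
  let C := ps_C R in
  let M := ps_M R in
  let W := ps_W R in
  let D := D_mat R in
  let P := pascal_mat R in
  let Fhat := mat_mul D (mat_mul (mat_inv (FS R)) D) in
  let Lhat := mat_mul D (mat_mul (mat_inv (LS R)) D) in
  let xC := ps_mul x C in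
  let g1 := ps_div (ps_sub (ps_sub M (ps_mul x M))
                           (ps_mul (ps_pow x 2) (ps_pow M 2)))
                   (ps_add one x) in
  let f1 := ps_div (ps_add x (ps_mul (ps_pow x 2) M)) (ps_add one x) in
  let G := ps_inv (ps_sub one (ps_scale 2%:R xC)) in
  (Fhat = riordan one xC /\
   riordan one xC = mat_mul P (riordan g1 f1)) /\
  (Lhat = riordan G xC /\
   riordan G xC = mat_mul (riordan W x) (mat_mul P (riordan g1 f1))) /\
  (Lhat = mat_mul (riordan G x) Fhat /\
   mat_mul (riordan G x) Fhat = mat_mul (riordan W x) Fhat /\
   mat_mul (riordan W x) Fhat =
     mat_mul Fhat (riordan (ps_inv (ps_sub one (ps_scale 2%:R x))) x)).
Proof.
cbv zeta; rewrite /D_mat /pascal_mat /FS /LS.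
rewrite !oneE !divE !powE !scaleE !cstn !subE !addE !oppE !mulE.
have -> : X * (ps_C R : fps) = aa by [].
rewrite -aa_ss.
have v20 : (X * (1 + X)) 0%N = 0 by rewrite fcoefXM.
pose at_ := comp aa (- X).
have at0 : at_ 0%N = 0 by rewrite /at_ comp_at0 aa0.
have nat0 : (- at_) 0%N = 0 by rewrite fcoefN at0 oppr0.
have at_eq : at_ * at_ - at_ - X = 0.
  have := congr1 (fun u => comp u (- X)) aa_eq.
  by rewrite /= comp0 compD compB (compM' negX0) compX ?negX0 // => <-; ring.
pose T := comp at_ (X * (1 + X)).
have T0 : T 0%N = 0 by rewrite /T comp_at0.
have T_eq : T * T - T - X * (1 + X) = 0.
  have := congr1 (fun u => comp u (X * (1 + X))) at_eq.
  by rewrite /= comp0 !compB (compM' v20) compX // => <-.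
have hT : T = - X.
  apply/eqP; rewrite -subr_eq0 opprK; apply/eqP.
  apply: (@unit_cancel _ (T - 1 - X)).
    by rewrite !fcoefB T0 fcoef1 /= sub0r subr0 oppr_eq0 oner_eq0.
  have -> : (T + X) * (T - 1 - X) = T * T - T - X * (1 + X) by ring.
  exact: T_eq.
have diag1 : forall i, (X * (1 + X)) 1%N ^+ i = 1.
  by move=> i; rewrite fcoefXM fcoefD fcoef1 /= addr0 expr1n.
have hFinv : mat_inv (riordan (1 : fps) (X * (1 + X))) = riordan (1 : fps) (- at_).
  apply: mat_inv_unique.
  - by move=> i j; apply: riordan_lower.
  - by move=> i; rewrite riordan_diag // diag1 fcoef1 /= mulr1 oner_eq0.
  - by rewrite riordan_mul // comp1 mulr1 compN -/T hT opprK riordan_id.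
have hF : mat_mul (riordan (1 : fps) (- X))
     (mat_mul (mat_inv (riordan (1 : fps) (X * (1 + X)))) (riordan (1 : fps) (- X))) =
   riordan (1 : fps) aa.
  rewrite hFinv riordan_mul // comp1 mulr1 comp_negX_f // opprK.
  by rewrite riordan_mul ?negX0 // comp1 mulr1 negneg.
have ss_nz : ss 0%N != 0 by rewrite ss0 oner_eq0.
have Gs : (ps_inv ss : fps) * ss = 1 by rewrite mulrC invK.
have WG : (ps_W R : fps) = ps_inv ss := inv_unique W_ss Gs.
pose Gt := comp (ps_inv ss) (- X).
have Gt_eq : Gt * (1 - 2%:R * at_) = 1.
  have := congr1 (fun u => comp u (- X)) Gs.
  by rewrite /= comp1 (compM' negX0) {2}aa_ss compB comp1 (compM' negX0) compn.
have hLinv : mat_inv (riordan (1 + 2%:R * X) (X * (1 + X))) = riordan Gt (- at_).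
  apply: mat_inv_unique.
  - by move=> i j; apply: riordan_lower.
  - move=> i; rewrite riordan_diag // diag1 fcoefD fcoefM0 fcoef1 /= mulr0 addr0.
    by rewrite mulr1 oner_eq0.
  - rewrite riordan_mul // compN -/T hT opprK.
    have := congr1 (fun u => comp u (X * (1 + X))) Gt_eq.
    rewrite /= comp1 (compM' v20) compB comp1 (compM' v20) compn -/T hT => h.
    have -> : (1 + 2%:R * X) * comp Gt (X * (1 + X)) = 1 by rewrite -[RHS]h; ring.
    exact: riordan_id.
have hL : mat_mul (riordan (1 : fps) (- X))
     (mat_mul (mat_inv (riordan (1 + 2%:R * X) (X * (1 + X)))) (riordan (1 : fps) (- X))) =
   riordan (ps_inv ss) aa.
  rewrite hLinv riordan_mul // comp1 mulr1 comp_negX_f // opprK.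
  by rewrite riordan_mul ?negX0 // mul1r negneg /Gt negneg.
have hv : (1 - X) * ps_inv (1 - X) = 1.
  by apply: invK; rewrite fcoefB fcoef1 /= subr0 oner_eq0.
pose y := X * (ps_inv (1 - X) : fps).
have y0 : y 0%N = 0 by rewrite /y fcoefXM.
have hw : (1 + X) * ps_inv (1 + X) = 1.
  by apply: invK; rewrite fcoefD fcoef1 /= addr0 oner_eq0.
have hwt : comp (ps_inv (1 + X)) y = 1 - X.
  have h1 : comp (ps_inv (1 + X)) y * (1 + y) = 1.
    have := congr1 (fun u => comp u y) hw.
    by rewrite /= comp1 (compM' y0) compD comp1 compX // mulrC.
  have h2 : (1 - X) * (1 + y) = 1.
    by rewrite /y mulrDr mulr1 mulrCA hv mulr1 subrK.
  exact: inv_unique h1 h2.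
pose Mt := comp (ps_M R) y.
have hM : y ^+ 2 * Mt ^+ 2 - (1 - y) * Mt + 1 = 0.
  have := congr1 (fun u => comp u y) M_eq.
  by rewrite /= comp0 !(compD, compB, compN, compM' y0, compXn' y0, comp1, compX y0) -/Mt.
have hy : y * (1 - X) - X = 0.
  by rewrite /y -mulrA [_ * (1 - X)]mulrC hv mulr1 subrr.
have hP : mat_mul (riordan (ps_inv (1 - X)) (X * ps_inv (1 - X)))
     (riordan
        (((ps_M R : fps) - X * ps_M R - X ^+ 2 * (ps_M R : fps) ^+ 2) * ps_inv (1 + X))
        ((X + X ^+ 2 * ps_M R) * ps_inv (1 + X))) = riordan (1 : fps) aa.
  rewrite riordan_mul // -/y.
  rewrite !(compM' y0) hwt !(compD, compB, compN, compM' y0, compXn' y0, compX y0) -/Mt.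
  congr riordan.
    have -> : (ps_inv (1 - X) : fps) * ((Mt - y * Mt - y ^+ 2 * Mt ^+ 2) * (1 - X)) =
        ((1 - X) * ps_inv (1 - X)) * (1 - (y ^+ 2 * Mt ^+ 2 - (1 - y) * Mt + 1))
      by ring.
    by rewrite hv hM subr0 mulr1.
  apply: quad_unique.
    by rewrite fcoefM0 fcoefD fcoefM0 fcoefX0 y0 expr2 !mul0r add0r mul0r.
  set q := (y + y ^+ 2 * Mt) * (1 - X).
  have -> : q * q - q + X = X ^+ 2 * (y ^+ 2 * Mt ^+ 2 - (1 - y) * Mt + 1) +
     (y * (1 - X) - X) * (- (X * Mt) + (1 + y * Mt) *
        (2%:R * X * (1 + y * Mt) + (y * (1 - X) - X) * (1 + y * Mt) - 1)).
    by rewrite /q; ring.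
  by rewrite hM hy mulr0 mul0r addr0.
have hc3 : comp (ps_inv (1 - 2%:R * X)) aa = ps_W R.
  rewrite WG; apply: (inv_unique (s := ss)) => //.
  have hi : (1 - 2%:R * X) * ps_inv (1 - 2%:R * X) = 1.
    by apply: invK; rewrite fcoefB fcoefM0 fcoef1 /= mulr0 subr0 oner_eq0.
  have := congr1 (fun u => comp u aa) hi.
  rewrite /= comp1 (compM' aa0) compB comp1 (compM' aa0) compn compX ?aa0 //.
  by rewrite aa_ss mulrC.
rewrite hF hL hP.
rewrite !riordan_mul ?aa0 // !comp1 !mulr1 !mul1r !comp_rX hc3 compX ?aa0 // -WG.
by do !split.
Qed.

End Fps.

Unset Implicit Arguments.

Theorem lemma3p1 (R : numFieldType) :
  let x := ps_X R in
  let one := ps_const (1 : R) in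
  let C := ps_C R in
  let M := ps_M R in
  let W := ps_W R in
  let D := D_mat R in
  let P := pascal_mat R in
  let Fhat := mat_mul D (mat_mul (mat_inv (FS R)) D) in
  let Lhat := mat_mul D (mat_mul (mat_inv (LS R)) D) in
  let xC := ps_mul x C in
  (* (M - x M - x^2 M^2) / (1 + x) *)
  let g1 := ps_div (ps_sub (ps_sub M (ps_mul x M))
                           (ps_mul (ps_pow x 2) (ps_pow M 2)))
                   (ps_add one x) in
  (* (x + x^2 M) / (1 + x) *)
  let f1 := ps_div (ps_add x (ps_mul (ps_pow x 2) M)) (ps_add one x) in
  let G := ps_inv (ps_sub one (ps_scale 2%:R xC)) in
  (* (a) *)
  (Fhat = riordan one xC /\
   riordan one xC = mat_mul P (riordan g1 f1)) /\
  (* (b) *)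
  (Lhat = riordan G xC /\
   riordan G xC = mat_mul (riordan W x) (mat_mul P (riordan g1 f1))) /\
  (* (c) *)
  (Lhat = mat_mul (riordan G x) Fhat /\
   mat_mul (riordan G x) Fhat = mat_mul (riordan W x) Fhat /\
   mat_mul (riordan W x) Fhat =
     mat_mul Fhat (riordan (ps_inv (ps_sub one (ps_scale 2%:R x))) x)).
Proof. exact: (@main_thm R). Qed.
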